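(* Let $E$ be a uniformly smooth real Banach space, $D\subseteq E$ a nonempty closed convex subset, $T:D\to D$ a nonexpansive mapping with $F(T)\neq\emptyset$, $f\in\Pi_D$ and $x_0\in D$. Let $\alpha_n\in[0,1]$ with $\alpha_n\to0$ and $\sum_{n=0}^\infty\alpha_n=\infty$, and define $x_{n+1}=\alpha_nf(x_n)+(1-\alpha_n)Tx_n$ for $n\ge0$. Assume $\|Tx_n-x_n\|\to0$. Then $\{x_n\}$ converges strongly to $Q(f)$.
   Context: $F(T)=\{x\in D: Tx=x\}$ denotes the fixed point set of $T$. $\Pi_D$ denotes the set of contractions on $D$: maps $f:D\to D$ for which there is $\alpha\in(0,1)$ with $\|f(x)-f(y)\|\le\alpha\|x-y\|$ for all $x,y\in D$. For $f\in\Pi_D$ and $t\in(0,1)$, let $x_t\in D$ be the unique solution of $x_t=tf(x_t)+(1-t)Tx_t$. When $E$ is uniformly smooth and $F(T)\neq\emptyset$, the strong limit $\lim_{t\to0^+}x_t$ exists and lies in $F(T)$ (a known result of Xu); the map $Q:\Pi_D\to F(T)$ is defined by $Q(f):=\lim_{t\to0^+}x_t$. *)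

(* Defs.v *)
From Stdlib Require Import Reals Lra.
Open Scope R_scope.
Set Implicit Arguments.

Record NormedSpace := {
  carrier :> Type;
  vzero : carrier;
  vadd : carrier -> carrier -> carrier;
  vopp : carrier -> carrier;
  vscal : R -> carrier -> carrier;
  vnorm : carrier -> R;
  vadd_assoc : forall x y z, vadd x (vadd y z) = vadd (vadd x y) z;
  vadd_comm : forall x y, vadd x y = vadd y x;
  vadd_zero : forall x, vadd x vzero = x;
  vadd_opp : forall x, vadd x (vopp x) = vzero;
  vscal_one : forall x, vscal 1 x = x;
  vscal_assoc : forall a b x, vscal a (vscal b x) = vscal (a * b) x;
  vscal_distr_v : forall a x y, vscal a (vadd x y) = vadd (vscal a x) (vscal a y);
  vscal_distr_s : forall a b x, vscal (a + b) x = vadd (vscal a x) (vscal b x);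
  vnorm_eq0 : forall x, vnorm x = 0 -> x = vzero;
  vnorm_scal : forall a x, vnorm (vscal a x) = Rabs a * vnorm x;
  vnorm_triangle : forall x y, vnorm (vadd x y) <= vnorm x + vnorm y
}.

Arguments vzero {_}.
Arguments vadd {_}.
Arguments vopp {_}.
Arguments vscal {_}.
Arguments vnorm {_}.

Definition vsub {E : NormedSpace} (x y : E) : E := vadd x (vopp y).
Definition vdist {E : NormedSpace} (x y : E) : R := vnorm (vsub x y).

Definition seq_conv {E : NormedSpace} (u : nat -> E) (q : E) : Prop :=
  forall eps, 0 < eps -> exists N, forall n, (N <= n)%nat -> vdist (u n) q < eps.

Definition vcauchy {E : NormedSpace} (u : nat -> E) : Prop :=
  forall eps, 0 < eps -> exists N, forall m n, (N <= m)%nat -> (N <= n)%nat ->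
    vdist (u m) (u n) < eps.

Definition vcomplete (E : NormedSpace) : Prop :=
  forall u : nat -> E, vcauchy u -> exists q, seq_conv u q.

(* Uniform smoothness: the modulus of smoothness
   rho(tau) = sup { (||x + tau y|| + ||x - tau y||)/2 - 1 : ||x|| = ||y|| = 1 }
   satisfies rho(tau)/tau -> 0 as tau -> 0+  (sup unfolded). *)
Definition uniformly_smooth (E : NormedSpace) : Prop :=
  forall eps, 0 < eps -> exists delta, 0 < delta /\
    forall tau, 0 < tau < delta -> forall x y : E, vnorm x = 1 -> vnorm y = 1 ->
      (vnorm (vadd x (vscal tau y)) + vnorm (vsub x (vscal tau y))) / 2 - 1
        <= eps * tau.

Definition vclosed_set {E : NormedSpace} (D : E -> Prop) : Prop :=
  forall (u : nat -> E) q, (forall n, D (u n)) -> seq_conv u q -> D q.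

Definition vconvex_set {E : NormedSpace} (D : E -> Prop) : Prop :=
  forall x y t, D x -> D y -> 0 <= t <= 1 ->
    D (vadd (vscal t x) (vscal (1 - t) y)).

Definition maps_into {E : NormedSpace} (D : E -> Prop) (T : E -> E) : Prop :=
  forall x, D x -> D (T x).

Definition nonexpansive_on {E : NormedSpace} (D : E -> Prop) (T : E -> E) : Prop :=
  forall x y, D x -> D y -> vdist (T x) (T y) <= vdist x y.

(* f in Pi_D : a contraction on D (D -> D) *)
Definition contraction_on {E : NormedSpace} (D : E -> Prop) (f : E -> E) : Prop :=
  maps_into D f /\
  exists a, 0 < a < 1 /\ forall x y, D x -> D y -> vdist (f x) (f y) <= a * vdist x y.

Definition fixed_point_set {E : NormedSpace} (D : E -> Prop) (T : E -> E) (x : E) : Prop :=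
  D x /\ T x = x.

Definition viscosity_net {E : NormedSpace} (D : E -> Prop) (T f : E -> E)
  (xt : R -> E) : Prop :=
  forall t, 0 < t < 1 ->
    D (xt t) /\ xt t = vadd (vscal t (f (xt t))) (vscal (1 - t) (T (xt t))).

Definition net_conv_0plus {E : NormedSpace} (xt : R -> E) (q : E) : Prop :=
  forall eps, 0 < eps -> exists delta, 0 < delta /\
    forall t, 0 < t < delta -> t < 1 -> vdist (xt t) q < eps.

(* q = Q(f): q is the strong limit as t -> 0+ of the (unique) net x_t *)
Definition is_Q {E : NormedSpace} (D : E -> Prop) (T f : E -> E) (q : E) : Prop :=
  forall xt, viscosity_net D T f xt -> net_conv_0plus xt q.

(* Main.v *)
Require Import Defs.
From Stdlib Require Import Reals Lra Lia List ClassicalEpsilon.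
Import ListNotations.
Open Scope R_scope.


Arguments vadd_assoc {_}. Arguments vadd_comm {_}. Arguments vadd_zero {_}. Arguments vadd_opp {_}.
Arguments vscal_one {_}. Arguments vscal_assoc {_}. Arguments vscal_distr_v {_}. Arguments vscal_distr_s {_}.
Arguments vnorm_eq0 {_}. Arguments vnorm_scal {_}. Arguments vnorm_triangle {_}.

Lemma vadd_0l {E : NormedSpace} (x : E) : vadd vzero x = x.
Proof. rewrite vadd_comm. apply vadd_zero. Qed.

Lemma vadd_cancel_l {E : NormedSpace} (a b c : E) : vadd a b = vadd a c -> b = c.
Proof.
  intro H.
  assert (H1 : vadd (vopp a) (vadd a b) = vadd (vopp a) (vadd a c)) by (rewrite H; reflexivity).
  rewrite !vadd_assoc in H1. rewrite (vadd_comm (vopp a) a), vadd_opp, !vadd_0l in H1. exact H1.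
Qed.

Lemma vscal_0 {E : NormedSpace} (x : E) : vscal 0 x = vzero.
Proof.
  apply (vadd_cancel_l (vscal 0 x)). rewrite vadd_zero, <- vscal_distr_s.
  now rewrite Rplus_0_r.
Qed.

Lemma vscal_zero {E : NormedSpace} (r : R) : vscal r (@vzero E) = vzero.
Proof.
  apply (vadd_cancel_l (vscal r vzero)). rewrite vadd_zero, <- vscal_distr_v.
  now rewrite vadd_zero.
Qed.

Lemma vopp_scal {E : NormedSpace} (x : E) : vopp x = vscal (-1) x.
Proof.
  apply (vadd_cancel_l x). rewrite vadd_opp.
  rewrite <- (vscal_one x) at 1. rewrite <- vscal_distr_s.
  replace (1 + -1) with 0 by ring. now rewrite vscal_0.
Qed.

Lemma vadd_swap4 {E : NormedSpace} (a b c d : E) :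
  vadd (vadd a b) (vadd c d) = vadd (vadd a c) (vadd b d).
Proof.
  rewrite <- !vadd_assoc. f_equal. rewrite !vadd_assoc. f_equal. apply vadd_comm.
Qed.

Inductive vx := VAtom (n : nat) | VZero | VAdd (a b : vx) | VOpp (a : vx)
  | VSub (a b : vx) | VScal (r : R) (a : vx).

Fixpoint vev {E : NormedSpace} (env : list E) (e : vx) : E :=
  match e with
  | VAtom n => nth n env vzero
  | VZero => vzero
  | VAdd a b => vadd (vev env a) (vev env b)
  | VOpp a => vopp (vev env a)
  | VSub a b => vsub (vev env a) (vev env b)
  | VScal r a => vscal r (vev env a)
  end.

Fixpoint coef (e : vx) (i : nat) : R :=
  match e with
  | VAtom n => if Nat.eqb n i then 1 else 0
  | VZero => 0
  | VAdd a b => coef a i + coef b i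
  | VOpp a => - coef a i
  | VSub a b => coef a i - coef b i
  | VScal r a => r * coef a i
  end.

Fixpoint linc {E : NormedSpace} (env : list E) (c : nat -> R) (k : nat) : E :=
  match env with
  | [] => vzero
  | a :: env' => vadd (vscal (c k) a) (linc env' c (S k))
  end.

Lemma linc_ext {E : NormedSpace} (env : list E) : forall c1 c2 k,
  (forall i, (k <= i < k + length env)%nat -> c1 i = c2 i) ->
  linc env c1 k = linc env c2 k.
Proof.
  induction env as [|a env IH]; intros c1 c2 k H; simpl; auto.
  simpl in H. rewrite (H k) by lia. f_equal. apply IH. intros; apply H; lia.
Qed.

Lemma linc_add {E : NormedSpace} (env : list E) : forall c1 c2 k,
  linc env (fun i => c1 i + c2 i) k = vadd (linc env c1 k) (linc env c2 k).
Proof.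
  induction env as [|a env IH]; intros; simpl. now rewrite vadd_zero.
  rewrite IH, vscal_distr_s. apply eq_sym, vadd_swap4.
Qed.

Lemma linc_scal {E : NormedSpace} (env : list E) : forall r c k,
  linc env (fun i => r * c i) k = vscal r (linc env c k).
Proof.
  induction env as [|a env IH]; intros; simpl. now rewrite vscal_zero.
  rewrite IH, vscal_distr_v, vscal_assoc. reflexivity.
Qed.

Lemma linc_zero {E : NormedSpace} (env : list E) : forall k,
  linc env (fun _ => 0) k = vzero.
Proof.
  induction env as [|a env IH]; intros; simpl; auto.
  rewrite IH, vscal_0. apply vadd_zero.
Qed.

Lemma linc_atom {E : NormedSpace} (env : list E) : forall n k,
  linc env (fun i => if Nat.eqb (k + n) i then 1 else 0) k = nth n env vzero.
Proof.
  induction env as [|a env IH]; intros n k; simpl. destruct n; reflexivity.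
  destruct n as [|n].
  - rewrite Nat.add_0_r, Nat.eqb_refl, vscal_one.
    rewrite (linc_ext env _ (fun _ => 0)). rewrite linc_zero. apply vadd_zero.
    intros i Hi. destruct (Nat.eqb_spec k i); [lia|reflexivity].
  - replace (Nat.eqb (k + S n) k) with false by (symmetry; apply Nat.eqb_neq; lia).
    rewrite vscal_0, vadd_0l. rewrite <- (IH n (S k)). apply linc_ext.
    intros i Hi. now replace (k + S n)%nat with (S k + n)%nat by lia.
Qed.

Lemma vev_linc {E : NormedSpace} (env : list E) (e : vx) :
  vev env e = linc env (coef e) 0.
Proof.
  induction e; simpl.
  - rewrite <- (linc_atom env n 0). reflexivity.
  - now rewrite linc_zero.
  - rewrite IHe1, IHe2, <- linc_add. reflexivity.
  - rewrite IHe, vopp_scal, <- linc_scal. apply linc_ext. intros; ring.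
  - unfold vsub. rewrite IHe1, IHe2, vopp_scal, <- linc_scal, <- linc_add.
    apply linc_ext. intros; ring.
  - rewrite IHe, <- linc_scal. reflexivity.
Qed.

Lemma vx_eq {E : NormedSpace} (env : list E) (e1 e2 : vx) :
  (forall i, (i < length env)%nat -> coef e1 i = coef e2 i) ->
  vev env e1 = vev env e2.
Proof.
  intro H. rewrite !vev_linc. apply linc_ext. intros; apply H; lia.
Qed.

Ltac vl_find t l :=
  lazymatch l with
  | (t :: _) => constr:(O)
  | (_ :: ?l') => let n := vl_find t l' in constr:(S n)
  end.

Ltac vl_atoms t acc :=
  lazymatch t with
  | @vadd _ ?a ?b => let acc := vl_atoms a acc in vl_atoms b acc
  | @vsub _ ?a ?b => let acc := vl_atoms a acc in vl_atoms b acc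
  | @vopp _ ?a => vl_atoms a acc
  | @vscal _ _ ?a => vl_atoms a acc
  | @vzero _ => acc
  | _ => match constr:(tt) with
         | _ => let _ := vl_find t acc in acc
         | _ => constr:(t :: acc)
         end
  end.

Ltac vl_reify t env :=
  lazymatch t with
  | @vadd _ ?a ?b => let ra := vl_reify a env in let rb := vl_reify b env in constr:(VAdd ra rb)
  | @vsub _ ?a ?b => let ra := vl_reify a env in let rb := vl_reify b env in constr:(VSub ra rb)
  | @vopp _ ?a => let ra := vl_reify a env in constr:(VOpp ra)
  | @vscal _ ?c ?a => let ra := vl_reify a env in constr:(VScal c ra)
  | @vzero _ => constr:(VZero)
  | _ => let n := vl_find t env in constr:(VAtom n)
  end.

Ltac vlin :=
  match goal with
  | |- @eq ?T ?L ?R =>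
    let env0 := vl_atoms L (@nil T) in
    let env := vl_atoms R env0 in
    let eL := vl_reify L env in
    let eR := vl_reify R env in
    change (vev env eL = vev env eR); apply vx_eq;
    let i := fresh "i" in let H := fresh "H" in
    intros i H; cbn [length] in H;
    repeat (first [ exfalso; lia | destruct i as [|i]; [ cbn; try ring | ] ])
  end.

Lemma test {E : NormedSpace} (A B P : E) t :
  vsub (vadd (vscal t A) (vscal (1-t) B)) P =
  vadd (vscal (1-t) (vsub B P)) (vscal t (vsub A P)).
Proof. vlin. Qed.

Lemma test2 {E : NormedSpace} (X F TT N : E) t : 0 < t < 1 ->
  X = vadd (vscal t F) (vscal (1-t) TT) ->
  vsub TT N = vadd (vsub X N) (vscal (-(t/(1-t))) (vsub F X)).
Proof. intros Ht ->. vlin; field; lra. Qed.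


Lemma vnorm_zero {E : NormedSpace} : vnorm (@vzero E) = 0.
Proof. rewrite <- (vscal_0 (@vzero E)), vnorm_scal, Rabs_R0. ring. Qed.

Lemma vnorm_opp {E : NormedSpace} (x : E) : vnorm (vopp x) = vnorm x.
Proof. rewrite vopp_scal, vnorm_scal, Rabs_left by lra. ring. Qed.

Lemma vnorm_ge0 {E : NormedSpace} (x : E) : 0 <= vnorm x.
Proof.
  pose proof (vnorm_triangle x (vopp x)) as H. rewrite vadd_opp, vnorm_zero, vnorm_opp in H. lra.
Qed.

Lemma vnorm_scal_pos {E : NormedSpace} (a : R) (x : E) : 0 <= a -> vnorm (vscal a x) = a * vnorm x.
Proof. intro. rewrite vnorm_scal, Rabs_pos_eq; auto. Qed.

Lemma vnorm_eq_of {E : NormedSpace} (x y : E) : x = y -> vnorm x = vnorm y.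
Proof. intros ->; reflexivity. Qed.

Lemma vdist_sym {E : NormedSpace} (x y : E) : vdist x y = vdist y x.
Proof. unfold vdist. rewrite <- vnorm_opp. apply vnorm_eq_of. vlin. Qed.

Lemma vdist_tri {E : NormedSpace} (x y z : E) : vdist x z <= vdist x y + vdist y z.
Proof. unfold vdist. replace (vsub x z) with (vadd (vsub x y) (vsub y z)) by vlin. apply vnorm_triangle. Qed.

Lemma vdist_ge0 {E : NormedSpace} (x y : E) : 0 <= vdist x y.
Proof. apply vnorm_ge0. Qed.

Lemma vdist_eq0 {E : NormedSpace} (x y : E) : vdist x y = 0 -> x = y.
Proof.
  unfold vdist. intro H. apply vnorm_eq0 in H.
  transitivity (vadd (vsub x y) y). vlin. rewrite H. vlin.
Qed.

Lemma vdist_refl {E : NormedSpace} (x : E) : vdist x x = 0.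
Proof. unfold vdist. replace (vsub x x) with (@vzero E) by vlin. apply vnorm_zero. Qed.

Lemma vnorm_tri_sub {E : NormedSpace} (x y : E) : vnorm (vsub x y) <= vnorm x + vnorm y.
Proof. unfold vsub. rewrite <- (vnorm_opp y). apply vnorm_triangle. Qed.

Lemma vnorm_rev {E : NormedSpace} (x y : E) : Rabs (vnorm (vadd x y) - vnorm x) <= vnorm y.
Proof.
  apply Rabs_le. split.
  - pose proof (vnorm_tri_sub (vadd x y) y) as H.
    replace (vsub (vadd x y) y) with x in H by vlin. lra.
  - pose proof (vnorm_triangle x y). lra.
Qed.

Lemma div_nonneg (x y : R) : 0 <= x -> 0 < y -> 0 <= x / y.
Proof. intros. unfold Rdiv. apply Rmult_le_pos; auto. left; apply Rinv_0_lt_compat; auto. Qed.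

Lemma div_le1 (x y : R) : x <= y -> 0 < y -> x / y <= 1.
Proof. intros. apply (Rmult_le_reg_r y); auto. replace (x / y * y) with x by (field; lra). lra. Qed.

Definition hq {E : NormedSpace} (z w : E) (s : R) : R := vnorm (vadd z (vscal s w)) ^ 2.

Lemma sq_conv (a p q : R) : 0 <= a <= 1 -> (a * p + (1 - a) * q) ^ 2 <= a * p ^ 2 + (1 - a) * q ^ 2.
Proof. intros. assert (0 <= a * (1 - a) * (p - q) ^ 2) by (apply Rmult_le_pos; [apply Rmult_le_pos; lra | apply pow2_ge_0]).
  assert ((a * p + (1 - a) * q) ^ 2 = a * p ^ 2 + (1 - a) * q ^ 2 - a * (1 - a) * (p - q) ^ 2) by ring. lra. Qed.

Lemma conv_line {E : NormedSpace} (z w : E) s1 s2 s3 : s1 <= s2 <= s3 ->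
  (s3 - s1) * hq z w s2 <= (s3 - s2) * hq z w s1 + (s2 - s1) * hq z w s3.
Proof.
  intros Hs. destruct (Req_dec s1 s3) as [Heq|Hne].
  { subst. assert (s2 = s3) by lra. subst. lra. }
  set (a := (s3 - s2) / (s3 - s1)).
  assert (Ha : 0 <= a <= 1).
  { unfold a; split. apply div_nonneg; lra.
    apply div_le1; lra. }
  assert (Hv : vadd z (vscal s2 w) =
    vadd (vscal a (vadd z (vscal s1 w))) (vscal (1 - a) (vadd z (vscal s3 w)))).
  { unfold a. vlin; field; lra. }
  assert (Hn : vnorm (vadd z (vscal s2 w)) <=
    a * vnorm (vadd z (vscal s1 w)) + (1 - a) * vnorm (vadd z (vscal s3 w))).
  { rewrite Hv. rewrite <- (vnorm_scal_pos a), <- (vnorm_scal_pos (1 - a)) by lra.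
    apply vnorm_triangle. }
  unfold hq.
  pose proof (vnorm_ge0 (vadd z (vscal s2 w))).
  assert (H2 : vnorm (vadd z (vscal s2 w)) ^ 2 <=
    a * vnorm (vadd z (vscal s1 w)) ^ 2 + (1 - a) * vnorm (vadd z (vscal s3 w)) ^ 2).
  { eapply Rle_trans; [| apply sq_conv; auto]. apply pow_incr; lra. }
  assert (Ha1 : a * (s3 - s1) = s3 - s2) by (unfold a; field; lra).
  assert (Ha2 : (1 - a) * (s3 - s1) = s2 - s1) by (unfold a; field; lra).
  rewrite <- Ha1, <- Ha2. nra.
Qed.

Definition Qp {E : NormedSpace} (z w : E) (r : R) : R := (hq z w r - hq z w 0) / r.

Lemma hq0 {E : NormedSpace} (z w : E) : hq z w 0 = vnorm z ^ 2.
Proof. unfold hq. f_equal. f_equal. vlin. Qed.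

Lemma step_ineq {E : NormedSpace} (X W : E) (al r : R) : 0 <= al -> 0 < r ->
  vnorm (vadd X (vscal al W)) ^ 2 <= vnorm X ^ 2 + al * Qp (vadd X (vscal al W)) W r.
Proof.
  intros Ha Hr. set (z := vadd X (vscal al W)).
  pose proof (conv_line z W (-al) 0 r ltac:(lra)) as H.
  assert (Hm : hq z W (- al) = vnorm X ^ 2).
  { unfold hq, z. f_equal. f_equal. vlin. }
  rewrite Hm, hq0 in H. unfold Qp. rewrite hq0.
  set (hr := hq z W r) in *. set (h0 := vnorm z ^ 2) in *.
  assert (al * ((hr - h0) / r) * r = al * (hr - h0)) by (field; lra).
  nra.
Qed.

Lemma Qp_mono {E : NormedSpace} (z w : E) r1 r2 : 0 < r1 <= r2 -> Qp z w r1 <= Qp z w r2.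
Proof.
  intros Hr. pose proof (conv_line z w 0 r1 r2 ltac:(lra)) as H.
  unfold Qp. apply (Rmult_le_reg_r (r1 * r2)). nra.
  replace ((hq z w r1 - hq z w 0) / r1 * (r1 * r2)) with ((hq z w r1 - hq z w 0) * r2) by (field; lra).
  replace ((hq z w r2 - hq z w 0) / r2 * (r1 * r2)) with ((hq z w r2 - hq z w 0) * r1) by (field; lra).
  nra.
Qed.

Lemma left_le_right {E : NormedSpace} (z w : E) s r : 0 < s -> 0 < r ->
  (vnorm z ^ 2 - hq z w (- s)) / s <= Qp z w r.
Proof.
  intros Hs Hr. pose proof (conv_line z w (-s) 0 r ltac:(lra)) as H.
  unfold Qp. rewrite hq0 in *. apply (Rmult_le_reg_r (s * r)). nra.
  replace ((vnorm z ^ 2 - hq z w (- s)) / s * (s * r)) with ((vnorm z ^ 2 - hq z w (- s)) * r) by (field; lra).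
  replace ((hq z w r - vnorm z ^ 2) / r * (s * r)) with ((hq z w r - vnorm z ^ 2) * s) by (field; lra).
  nra.
Qed.

Lemma Qp_subadd {E : NormedSpace} (z v y : E) r : 0 < r ->
  Qp z (vadd v y) r <= Qp z v (2 * r) + Qp z y (2 * r).
Proof.
  intros Hr. unfold Qp. rewrite !hq0. unfold hq.
  assert (Hv : vadd z (vscal r (vadd v y)) =
    vadd (vscal (1/2) (vadd z (vscal (2 * r) v))) (vscal (1 - 1/2) (vadd z (vscal (2 * r) y)))).
  { vlin. field. field. }
  assert (Hn : vnorm (vadd z (vscal r (vadd v y))) <= 1/2 * vnorm (vadd z (vscal (2 * r) v)) + (1 - 1/2) * vnorm (vadd z (vscal (2 * r) y))).
  { rewrite Hv. rewrite <- (vnorm_scal_pos (1/2)), <- (vnorm_scal_pos (1 - 1/2)) by lra.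
    apply vnorm_triangle. }
  set (A := vnorm (vadd z (vscal (2 * r) v))) in *. set (B := vnorm (vadd z (vscal (2 * r) y))) in *.
  pose proof (vnorm_ge0 (vadd z (vscal r (vadd v y)))).
  assert (H2 : vnorm (vadd z (vscal r (vadd v y))) ^ 2 <= 1/2 * A ^ 2 + (1 - 1/2) * B ^ 2).
  { eapply Rle_trans; [| apply sq_conv; lra]. apply pow_incr; lra. }
  apply (Rmult_le_reg_r (2 * r)). lra.
  replace ((vnorm (vadd z (vscal r (vadd v y))) ^ 2 - vnorm z ^ 2) / r * (2 * r))
    with (2 * (vnorm (vadd z (vscal r (vadd v y))) ^ 2 - vnorm z ^ 2)) by (field; lra).
  replace (((A ^ 2 - vnorm z ^ 2) / (2 * r) + (B ^ 2 - vnorm z ^ 2) / (2 * r)) * (2 * r))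
    with (A ^ 2 - vnorm z ^ 2 + (B ^ 2 - vnorm z ^ 2)) by (field; lra).
  lra.
Qed.

Lemma Qp_bound {E : NormedSpace} (z y : E) r : 0 < r ->
  Qp z y r <= 2 * vnorm z * vnorm y + r * vnorm y ^ 2.
Proof.
  intros Hr. unfold Qp. rewrite hq0. unfold hq.
  assert (Hn : vnorm (vadd z (vscal r y)) <= vnorm z + r * vnorm y).
  { rewrite <- (vnorm_scal_pos r) by lra. apply vnorm_triangle. }
  pose proof (vnorm_ge0 (vadd z (vscal r y))). pose proof (vnorm_ge0 z). pose proof (vnorm_ge0 y).
  apply (Rmult_le_reg_r r). lra.
  replace ((vnorm (vadd z (vscal r y)) ^ 2 - vnorm z ^ 2) / r * r)
    with (vnorm (vadd z (vscal r y)) ^ 2 - vnorm z ^ 2) by (field; lra).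
  assert (vnorm (vadd z (vscal r y)) ^ 2 <= (vnorm z + r * vnorm y) ^ 2) by (apply pow_incr; lra).
  nra.
Qed.


Lemma abs_split (x y : R) : Rabs x <= y -> - y <= x <= y.
Proof. unfold Rabs. destruct (Rcase_abs x); lra. Qed.

Lemma gap {E : NormedSpace} (Hus : uniformly_smooth E) K W eps :
  0 < K -> 0 < W -> 0 < eps -> exists r0, 0 < r0 /\
  forall r (z w : E), 0 < r <= r0 -> vnorm z <= K -> vnorm w <= W ->
    hq z w r + hq z w (- r) - 2 * vnorm z ^ 2 <= eps * r.
Proof.
  intros HK HW He.
  destruct (Hus (eps / (8 * K * W))) as [d [Hd Hsm]].
  { apply Rdiv_lt_0_compat; nra. }
  set (C := 2 * W ^ 2 + 4 * W ^ 2 / d).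
  assert (HC : 0 < C). { unfold C. assert (0 <= 4 * W ^ 2 / d) by (apply div_nonneg; nra). nra. }
  exists (eps / (2 * C)). split. { apply Rdiv_lt_0_compat; lra. }
  intros r z w Hr Hz Hw.
  assert (HrC : r * C <= eps / 2).
  { assert (Hr' : r * C <= eps / (2 * C) * C) by (apply Rmult_le_compat_r; lra).
    replace (eps / (2 * C) * C) with (eps / 2) in Hr' by (field; lra). lra. }
  unfold hq.
  set (c := vnorm z) in *. set (m := vnorm w) in *.
  set (A := vnorm (vadd z (vscal r w))). set (B := vnorm (vadd z (vscal (- r) w))).
  assert (Hc0 : 0 <= c) by apply vnorm_ge0. assert (Hm0 : 0 <= m) by apply vnorm_ge0.
  assert (HA : Rabs (A - c) <= r * m).
  { unfold A, c, m. rewrite <- (vnorm_scal_pos r w) by lra. apply vnorm_rev. }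
  assert (HB : Rabs (B - c) <= r * m).
  { unfold B, c, m. replace (r * vnorm w) with (vnorm (vscal (- r) w)).
    apply vnorm_rev. rewrite vnorm_scal, Rabs_Ropp, Rabs_pos_eq; lra. }
  assert (HA2 : (A - c) ^ 2 <= (r * m) ^ 2) by (apply pow_maj_Rabs; auto).
  assert (HB2 : (B - c) ^ 2 <= (r * m) ^ 2) by (apply pow_maj_Rabs; auto).
  apply abs_split in HA. apply abs_split in HB.
  assert (Hid : A ^ 2 + B ^ 2 - 2 * c ^ 2 = 2 * c * (A + B - 2 * c) + (A - c) ^ 2 + (B - c) ^ 2) by ring.
  assert (Hkey : 2 * c * (A + B - 2 * c) <= eps * r / 2 + 4 * r ^ 2 * m ^ 2 / d).
  { assert (H4 : 0 <= 4 * r ^ 2 * m ^ 2 / d) by (apply div_nonneg; nra).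
    destruct (Rle_lt_dec (d * c) (r * m)) as [Hcase|Hcase].
    -
      assert (Hc' : c <= r * m / d).
      { apply (Rmult_le_reg_l d); auto. replace (d * (r * m / d)) with (r * m) by (field; lra). lra. }
      assert (2 * c * (A + B - 2 * c) <= 4 * c * (r * m)) by nra.
      assert (4 * c * (r * m) <= 4 * (r * m / d) * (r * m)) by nra.
      replace (4 * r ^ 2 * m ^ 2 / d) with (4 * (r * m / d) * (r * m)) by (field; lra).
      assert (0 <= eps * r / 2) by nra. lra.
    -
      destruct (Req_dec m 0) as [Hm|Hm].
      { assert (A = c) by nra. assert (B = c) by nra. subst; nra. }
      assert (Hmp : 0 < m) by lra.
      assert (Hcp : 0 < c) by nra.
      set (x := vscal (1 / c) z). set (y := vscal (1 / m) w). set (tau := r * m / c).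
      assert (Hx : vnorm x = 1). { unfold x. rewrite vnorm_scal_pos. fold c. field; lra. apply div_nonneg; lra. }
      assert (Hy : vnorm y = 1). { unfold y. rewrite vnorm_scal_pos. fold m. field; lra. apply div_nonneg; lra. }
      assert (Htau : 0 < tau < d).
      { unfold tau. split. apply Rdiv_lt_0_compat; nra.
        apply (Rmult_lt_reg_r c); auto. replace (r * m / c * c) with (r * m) by (field; lra). lra. }
      pose proof (Hsm tau Htau x y Hx Hy) as Hs.
      assert (HA' : A = c * vnorm (vadd x (vscal tau y))).
      { unfold A. rewrite <- vnorm_scal_pos by lra. apply vnorm_eq_of.
        unfold x, y, tau. vlin; field; lra. }
      assert (HB' : B = c * vnorm (vsub x (vscal tau y))).
      { unfold B. rewrite <- vnorm_scal_pos by lra. apply vnorm_eq_of.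
        unfold x, y, tau. vlin; field; lra. }
      assert (HAB : A + B <= 2 * c + 2 * (eps / (8 * K * W)) * r * m).
      { rewrite HA', HB'.
        assert (vnorm (vadd x (vscal tau y)) + vnorm (vsub x (vscal tau y)) <= 2 + 2 * (eps / (8 * K * W)) * tau) by lra.
        replace (2 * c + 2 * (eps / (8 * K * W)) * r * m) with (c * (2 + 2 * (eps / (8 * K * W)) * tau)) by (unfold tau; field; lra).
        nra. }
      assert (Hq : 2 * c * (A + B - 2 * c) <= 4 * c * ((eps / (8 * K * W)) * r * m)) by nra.
      assert (Hb : c * m <= K * W) by nra.
      assert (Hq2 : 4 * c * ((eps / (8 * K * W)) * r * m) = (eps * r / 2) * (c * m / (K * W))) by (field; nra).
      assert (Hq3 : c * m / (K * W) <= 1) by (apply div_le1; nra).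
      assert (0 <= eps * r / 2) by nra.
      assert ((eps * r / 2) * (c * m / (K * W)) <= eps * r / 2) by nra.
      lra. }
  assert (Hfin : 2 * (r * m) ^ 2 + 4 * r ^ 2 * m ^ 2 / d <= r * (r * C)).
  { unfold C. assert (m ^ 2 <= W ^ 2) by nra.
    replace (2 * (r * m) ^ 2 + 4 * r ^ 2 * m ^ 2 / d) with (r * r * (2 * m ^ 2 + 4 * m ^ 2 / d)) by (field; lra).
    replace (r * (r * (2 * W ^ 2 + 4 * W ^ 2 / d))) with (r * r * (2 * W ^ 2 + 4 * W ^ 2 / d)) by ring.
    apply Rmult_le_compat_l. nra.
    assert (4 * m ^ 2 / d <= 4 * W ^ 2 / d). { unfold Rdiv. apply Rmult_le_compat_r. left; apply Rinv_0_lt_compat; lra. lra. }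
    lra. }
  assert (r * (r * C) <= r * (eps / 2)) by (apply Rmult_le_compat_l; lra).
  lra.
Qed.


Fixpoint ps (a : nat -> R) (n : nat) : R :=
  match n with O => 0 | S n => ps a n + a n end.

Lemma sum_ps (a : nat -> R) n : sum_f_R0 a n = ps a (S n).
Proof. induction n; simpl in *. ring. rewrite IHn. reflexivity. Qed.

Lemma ps_shift (a : nat -> R) N m : ps a (N + m) = ps a N + ps (fun k => a (N + k)%nat) m.
Proof. induction m; simpl. rewrite Nat.add_0_r. ring. rewrite Nat.add_succ_r. simpl. rewrite IHm. ring. Qed.

Lemma ps_mono (a : nat -> R) : (forall n, 0 <= a n) -> forall n m, (n <= m)%nat -> ps a n <= ps a m.
Proof.
  intros Ha n m H. induction H. lra. simpl. specialize (Ha m). lra.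
Qed.

Lemma ps_nonneg (a : nat -> R) : (forall n, 0 <= a n) -> forall n, 0 <= ps a n.
Proof. intros Ha n. apply (ps_mono a Ha 0 n). lia. Qed.

Lemma xu_lemma (d alpha : nat -> R) (c : R) :
  0 < c <= 1 -> (forall n, 0 <= alpha n <= 1) ->
  (forall M, exists N, M < sum_f_R0 alpha N) -> (forall n, 0 <= d n) ->
  (forall eps, 0 < eps -> exists N, forall n, (N <= n)%nat ->
      d (S n) <= (1 - c * alpha n) * d n + alpha n * eps) ->
  forall eps, 0 < eps -> exists N, forall n, (N <= n)%nat -> d n < eps.
Proof.
  intros Hc Ha Hsum Hd Hstep eps He.
  destruct (Hstep (c * eps / 2)) as [N HN]. { apply Rdiv_lt_0_compat; nra. }
  set (e := fun n => d n - eps / 2).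
  set (S' := ps (fun k => alpha (N + k)%nat)).
  set (Mx := Rmax 0 (e N)).
  assert (HS0 : forall k, 0 <= alpha (N + k)%nat) by (intro; apply Ha).
  assert (Hind : forall m, (1 + c * S' m) * e (N + m)%nat <= Mx).
  { induction m.
    - unfold S'; simpl. rewrite Nat.add_0_r. unfold Mx. pose proof (Rmax_r 0 (e N)). lra.
    - assert (Hst := HN (N + m)%nat ltac:(lia)).
      replace (N + S m)%nat with (S (N + m)) by lia.
      assert (HSm : 0 <= S' m) by (apply ps_nonneg; auto).
      pose proof (Ha (N + m)%nat) as Ham.
      assert (HeS : e (S (N + m)) <= (1 - c * alpha (N + m)%nat) * e (N + m)%nat).
      { unfold e. assert (alpha (N + m)%nat * (c * eps / 2) = c * alpha (N + m)%nat * (eps / 2)) by field.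
        nra. }
      assert (HS1 : S' (S m) = S' m + alpha (N + m)%nat) by reflexivity.
      rewrite HS1.
      destruct (Rle_lt_dec (e (S (N + m))) 0) as [Hneg|Hpos].
      + assert (0 <= Mx) by (unfold Mx; apply Rmax_l).
        assert (0 <= 1 + c * (S' m + alpha (N + m)%nat)) by nra. nra.
      + assert (Hc1 : 0 <= 1 - c * alpha (N + m)%nat) by nra.
        assert (Hpos' : 0 < e (N + m)%nat).
        { destruct (Rle_lt_dec (e (N + m)%nat) 0); auto. nra. }
        set (X := c * S' m) in *. set (y := c * alpha (N + m)%nat) in *.
        assert (HX : 0 <= X) by (unfold X; nra). assert (Hy : 0 <= y) by (unfold y; nra).
        assert ((1 + c * (S' m + alpha (N + m)%nat)) = 1 + X + y) by (unfold X, y; ring).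
        rewrite H.
        assert ((1 + X + y) * e (S (N + m)) <= (1 + X + y) * ((1 - y) * e (N + m)%nat)) by
          (apply Rmult_le_compat_l; lra).
        assert ((1 + X + y) * (1 - y) <= 1 + X) by nra.
        assert ((1 + X + y) * ((1 - y) * e (N + m)%nat) <= (1 + X) * e (N + m)%nat) by nra.
        lra. }
  assert (HMx : 0 <= Mx) by (unfold Mx; apply Rmax_l).
  destruct (Hsum (4 * Mx / (c * eps) + ps alpha N)) as [N' HN'].
  rewrite sum_ps in HN'.
  assert (Hbig : 4 * Mx / (c * eps) < S' (S N')).
  { assert (H1 : ps alpha (S N') <= ps alpha (N + S N')) by (apply ps_mono; [intro; apply Ha| lia]).
    rewrite ps_shift in H1. unfold S'. lra. }
  exists (N + S N')%nat. intros n Hn.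
  replace n with (N + (n - N))%nat by lia.
  assert (HSm : S' (S N') <= S' (n - N)%nat) by (apply ps_mono; auto; lia).
  pose proof (Hind (n - N)%nat) as Hi.
  set (Sv := S' (n - N)%nat) in *. set (ev := e (N + (n - N))%nat) in *.
  assert (Hev : ev <= eps / 4).
  { destruct (Rle_lt_dec ev 0) as [H0|H0]. lra.
    assert (H4 : 4 * Mx / (c * eps) * (c * eps) = 4 * Mx) by (field; lra).
    assert (Hcs : 4 * Mx < Sv * (c * eps)).
    { rewrite <- H4. apply Rmult_lt_compat_r. nra. lra. }
    assert (c * Sv * ev <= Mx) by nra.
    nra. }
  unfold ev, e in Hev. lra.
Qed.


Lemma small_zero (x : R) : 0 <= x -> (forall e, 0 < e -> x < e) -> x = 0.
Proof. intros H0 H. destruct (Req_dec x 0); auto. specialize (H x ltac:(lra)). lra. Qed.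

Fixpoint iterv {E : NormedSpace} (Phi : E -> E) (d0 : E) (n : nat) : E :=
  match n with O => d0 | S n => Phi (iterv Phi d0 n) end.

Lemma banach_fp {E : NormedSpace} (HE : vcomplete E) (D : E -> Prop) (HDcl : vclosed_set D)
  (d0 : E) (Hd0 : D d0) (Phi : E -> E) (HPD : maps_into D Phi) (k : R) (Hk : 0 <= k < 1)
  (HPc : forall x y, D x -> D y -> vdist (Phi x) (Phi y) <= k * vdist x y) :
  exists y, D y /\ Phi y = y.
Proof.
  set (y := iterv Phi d0).
  assert (HyD : forall n, D (y n)) by (induction n; simpl; [auto | apply HPD; auto]).
  set (B := vdist (y 1%nat) (y 0%nat)).
  assert (HB : 0 <= B) by apply vdist_ge0.
  assert (Hstep : forall n, vdist (y (S n)) (y n) <= k ^ n * B).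
  { induction n. rewrite pow_O, Rmult_1_l. apply Rle_refl.
    change (vdist (Phi (y (S n))) (Phi (y n)) <= k ^ S n * B).
    eapply Rle_trans. apply HPc; auto. simpl. nra. }
  assert (Hkn : forall n, 0 <= k ^ n) by (intro; apply pow_le; lra).
  assert (Hfar : forall n m, vdist (y (n + m)%nat) (y n) <= k ^ n * B * (1 - k ^ m) / (1 - k)).
  { intros n m. induction m.
    - rewrite Nat.add_0_r, vdist_refl. simpl. replace (1 - 1) with 0 by ring. unfold Rdiv. lra.
    - eapply Rle_trans. apply (vdist_tri _ (y (n + m)%nat)).
      rewrite Nat.add_succ_r. eapply Rle_trans. apply Rplus_le_compat. apply Hstep. apply IHm.
      rewrite pow_add. right. simpl. field. lra. }
  assert (Hfar2 : forall n m, vdist (y (n + m)%nat) (y n) <= k ^ n * B / (1 - k)).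
  { intros. eapply Rle_trans. apply Hfar. unfold Rdiv. apply Rmult_le_compat_r.
    left; apply Rinv_0_lt_compat; lra. assert (0 <= k ^ m) by auto. assert (0 <= k ^ n * B) by (apply Rmult_le_pos; auto). nra. }
  assert (Hcau : vcauchy y).
  { intros eps He.
    destruct (pow_lt_1_zero k ltac:(rewrite Rabs_pos_eq; lra) (eps * (1 - k) / (B + 1))) as [N HN].
    { apply Rdiv_lt_0_compat; nra. }
    exists N. intros m n Hm Hn.
    assert (Hgen : forall a b, (N <= a)%nat -> (a <= b)%nat -> vdist (y b) (y a) < eps).
    { intros a b Ha Hab. replace b with (a + (b - a))%nat by lia.
      eapply Rle_lt_trans. apply Hfar2.
      specialize (HN a Ha). rewrite Rabs_pos_eq in HN by auto.
      apply (Rmult_lt_reg_r (1 - k)). lra.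
      replace (k ^ a * B / (1 - k) * (1 - k)) with (k ^ a * B) by (field; lra).
      assert (k ^ a * (B + 1) < eps * (1 - k) / (B + 1) * (B + 1)) by (apply Rmult_lt_compat_r; lra).
      replace (eps * (1 - k) / (B + 1) * (B + 1)) with (eps * (1 - k)) in H by (field; lra).
      nra. }
    destruct (Nat.le_ge_cases m n).
    - rewrite vdist_sym. apply Hgen; auto.
    - apply Hgen; auto. }
  destruct (HE y Hcau) as [ys Hys].
  assert (HysD : D ys) by (apply (HDcl y); auto).
  exists ys. split; auto.
  apply vdist_eq0. apply small_zero. apply vdist_ge0.
  intros e He.
  destruct (Hys (e / 2) ltac:(lra)) as [N HN].
  eapply Rle_lt_trans. apply (vdist_tri _ (Phi (y N))).
  assert (H1 : vdist (Phi ys) (Phi (y N)) <= k * vdist ys (y N)) by (apply HPc; auto).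
  rewrite (vdist_sym ys) in H1.
  pose proof (HN N ltac:(lia)) as H2. pose proof (HN (S N) ltac:(lia)) as H3.
  pose proof (vdist_ge0 (y N) ys).
  assert (k * vdist (y N) ys <= vdist (y N) ys) by nra.
  change (Phi (y N)) with (y (S N)) in *. lra.
Qed.


Lemma aff_sub {E : NormedSpace} (X A B P : E) t : X = vadd (vscal t A) (vscal (1 - t) B) ->
  vsub X P = vadd (vscal t (vsub A P)) (vscal (1 - t) (vsub B P)).
Proof. intros ->. vlin. Qed.

Lemma net_T {E : NormedSpace} (X A B N : E) t : 0 < t < 1 ->
  X = vadd (vscal t A) (vscal (1 - t) B) ->
  vsub B N = vadd (vsub X N) (vscal (-(t / (1 - t))) (vsub A X)).
Proof. intros Ht ->. vlin; field; lra. Qed.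

Lemma net_diff {E : NormedSpace} (X A B : E) t : X = vadd (vscal t A) (vscal (1 - t) B) ->
  vsub X B = vscal t (vsub A B).
Proof. intros ->. vlin. Qed.

Lemma uncv_lt (u : nat -> R) : Un_cv u 0 -> forall e, 0 < e -> exists N, forall n, (N <= n)%nat -> u n < e.
Proof.
  intros H e He. destruct (H e He) as [N HN]. exists N. intros n Hn.
  specialize (HN n Hn). unfold R_dist in HN. rewrite Rminus_0_r in HN.
  pose proof (Rle_abs (u n)). lra.
Qed.

Lemma small_zero' (x C : R) : 0 <= x -> 0 < C -> (forall e, 0 < e -> x <= C * e) -> x = 0.
Proof.
  intros H0 HC H. destruct (Req_dec x 0); auto.
  specialize (H (x / (2 * C)) ltac:(apply Rdiv_lt_0_compat; lra)).
  replace (C * (x / (2 * C))) with (x / 2) in H by (field; lra). lra.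
Qed.

Lemma sq_diff_le (A1 A2 d L : R) : 0 <= A1 -> 0 <= A2 -> A1 <= L -> A2 <= L -> 0 <= d ->
  A1 <= A2 + d -> A1 ^ 2 <= A2 ^ 2 + d * (2 * L).
Proof.
  intros. destruct (Rle_lt_dec A1 A2).
  - assert (A1 ^ 2 <= A2 ^ 2) by (apply pow_incr; lra). nra.
  - assert (A1 ^ 2 - A2 ^ 2 = (A1 - A2) * (A1 + A2)) by ring.
    assert ((A1 - A2) * (A1 + A2) <= d * (A1 + A2)) by (apply Rmult_le_compat_r; lra).
    assert (d * (A1 + A2) <= d * (2 * L)) by (apply Rmult_le_compat_l; lra).
    lra.
Qed.

Lemma Qp_lip {E : NormedSpace} (z1 w1 z2 w2 : E) r K U eta beta :
  0 < r <= 1 -> vnorm z1 <= K -> vnorm z2 <= K -> vnorm w1 <= U -> vnorm w2 <= U ->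
  vnorm (vsub z1 z2) <= eta -> vnorm (vsub w1 w2) <= beta ->
  Qp z1 w1 r <= Qp z2 w2 r + (2 * (K + U) * (eta + r * beta) + 2 * K * eta) / r.
Proof.
  intros Hr Hz1 Hz2 Hw1 Hw2 He Hb.
  assert (HA1 : vnorm (vadd z1 (vscal r w1)) <= K + U).
  { eapply Rle_trans. apply vnorm_triangle. rewrite vnorm_scal_pos by lra.
    pose proof (vnorm_ge0 w1). nra. }
  assert (HA2 : vnorm (vadd z2 (vscal r w2)) <= K + U).
  { eapply Rle_trans. apply vnorm_triangle. rewrite vnorm_scal_pos by lra.
    pose proof (vnorm_ge0 w2). nra. }
  assert (Hd : vnorm (vadd z1 (vscal r w1)) <= vnorm (vadd z2 (vscal r w2)) + (eta + r * beta)).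
  { replace (vadd z1 (vscal r w1)) with
      (vadd (vadd z2 (vscal r w2)) (vadd (vsub z1 z2) (vscal r (vsub w1 w2)))) by vlin.
    eapply Rle_trans. apply vnorm_triangle. apply Rplus_le_compat_l.
    eapply Rle_trans. apply vnorm_triangle. rewrite vnorm_scal_pos by lra. nra. }
  assert (Hz : vnorm z2 <= vnorm z1 + eta).
  { replace z2 with (vadd z1 (vopp (vsub z1 z2))) by vlin.
    eapply Rle_trans. apply vnorm_triangle. rewrite vnorm_opp. lra. }
  pose proof (vnorm_ge0 (vsub z1 z2)). pose proof (vnorm_ge0 (vsub w1 w2)).
  assert (H1 := sq_diff_le _ _ (eta + r * beta) (K + U) (vnorm_ge0 _) (vnorm_ge0 _) HA1 HA2 ltac:(nra) Hd).
  assert (H2 := sq_diff_le _ _ eta K (vnorm_ge0 _) (vnorm_ge0 _) Hz2 Hz1 ltac:(lra) Hz).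
  unfold Qp. rewrite !hq0. unfold hq.
  apply (Rmult_le_reg_r r). lra.
  replace ((vnorm (vadd z1 (vscal r w1)) ^ 2 - vnorm z1 ^ 2) / r * r)
    with (vnorm (vadd z1 (vscal r w1)) ^ 2 - vnorm z1 ^ 2) by (field; lra).
  replace (((vnorm (vadd z2 (vscal r w2)) ^ 2 - vnorm z2 ^ 2) / r +
     (2 * (K + U) * (eta + r * beta) + 2 * K * eta) / r) * r)
    with (vnorm (vadd z2 (vscal r w2)) ^ 2 - vnorm z2 ^ 2 +
     (2 * (K + U) * (eta + r * beta) + 2 * K * eta)) by (field; lra).
  lra.
Qed.

Lemma half_pow n : 0 < (1/2) ^ n <= 1.
Proof. induction n; simpl; lra. Qed.


Lemma div_mul_cancel (x y : R) : y <> 0 -> x / y * y = x.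
Proof. intros. field. auto. Qed.

Theorem theorem3p1 (E : NormedSpace) (HE : vcomplete E) (Hus : uniformly_smooth E)
  (D : E -> Prop) (HDne : exists d, D d) (HDcl : vclosed_set D) (HDcv : vconvex_set D)
  (T : E -> E) (HTD : maps_into D T) (HTne : nonexpansive_on D T)
  (HFT : exists p, fixed_point_set D T p)
  (f : E -> E) (Hf : contraction_on D f)
  (alpha : nat -> R) (Ha01 : forall n, 0 <= alpha n <= 1)
  (Ha0 : Un_cv alpha 0)
  (Hasum : forall M, exists N, M < sum_f_R0 alpha N)
  (x : nat -> E) (Hx0 : D (x O))
  (Hrec : forall n, x (S n) = vadd (vscal (alpha n) (f (x n)))
                                   (vscal (1 - alpha n) (T (x n))))
  (HTx : Un_cv (fun n => vdist (T (x n)) (x n)) 0)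
  (q : E) (Hq : is_Q D T f q) :
  seq_conv x q.
Proof.
  destruct Hf as [HfD [a [Ha Hfc]]].
  destruct HFT as [p [HpD HTp]].
  assert (Hex : forall t, exists y, 0 < t < 1 -> D y /\ y = vadd (vscal t (f y)) (vscal (1 - t) (T y))).
  { intro t. destruct (Rlt_dec 0 t) as [H0|H0]; [destruct (Rlt_dec t 1) as [H1|H1]|].
    2,3: exists p; intros; lra.
    destruct HDne as [d0 Hd0].
    destruct (banach_fp HE D HDcl d0 Hd0 (fun y => vadd (vscal t (f y)) (vscal (1 - t) (T y)))) with (k := t * a + (1 - t)) as [y [HyD Hy]].
    - intros y Hy. apply HDcv; [apply HfD | apply HTD | lra]; auto.
    - split; nra.
    - intros y1 y2 H1' H2'. cbv beta. unfold vdist.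
      replace (vsub (vadd (vscal t (f y1)) (vscal (1 - t) (T y1))) (vadd (vscal t (f y2)) (vscal (1 - t) (T y2))))
        with (vadd (vscal t (vsub (f y1) (f y2))) (vscal (1 - t) (vsub (T y1) (T y2)))) by vlin.
      eapply Rle_trans. apply vnorm_triangle. rewrite !vnorm_scal_pos by lra.
      pose proof (Hfc y1 y2 H1' H2'). pose proof (HTne y1 y2 H1' H2'). unfold vdist in *.
      pose proof (vnorm_ge0 (vsub y1 y2)). nra.
    - exists y. intros _. split; auto. }
  set (xt := fun t => proj1_sig (constructive_indefinite_description _ (Hex t))).
  assert (Hxt : forall t, 0 < t < 1 -> D (xt t) /\ xt t = vadd (vscal t (f (xt t))) (vscal (1 - t) (T (xt t)))).
  { intros t Ht. exact (proj2_sig (constructive_indefinite_description _ (Hex t)) Ht). }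
  clearbody xt.
  assert (HQ : net_conv_0plus xt q) by (apply Hq; exact Hxt).
  clear Hq Hex.
  set (Cp := vdist (f p) p).
  assert (HCp : 0 <= Cp) by apply vdist_ge0.
  assert (Hfp : forall y, D y -> vdist (f y) p <= a * vdist y p + Cp).
  { intros y Hy. eapply Rle_trans. apply (vdist_tri _ (f p)). pose proof (Hfc y p Hy HpD). unfold Cp. lra. }
  assert (HTp' : forall y, D y -> vdist (T y) p <= vdist y p).
  { intros y Hy. rewrite <- HTp at 1. apply HTne; auto. }
  set (R1 := Cp / (1 - a)).
  assert (HR1 : 0 <= R1) by (apply div_nonneg; lra).
  assert (HCpR1 : Cp = (1 - a) * R1) by (unfold R1; field; lra).
  assert (Hnetb : forall t, 0 < t < 1 -> vdist (xt t) p <= R1).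
  { intros t Ht. destruct (Hxt t Ht) as [HD Heq].
    assert (H1 : vdist (xt t) p <= t * vdist (f (xt t)) p + (1 - t) * vdist (T (xt t)) p).
    { unfold vdist. rewrite (aff_sub _ _ _ p t Heq). eapply Rle_trans. apply vnorm_triangle.
      rewrite !vnorm_scal_pos by lra. lra. }
    pose proof (Hfp _ HD). pose proof (HTp' _ HD).
    assert (H2 : vdist (xt t) p * (1 - a) <= Cp) by nra.
    apply (Rmult_le_reg_r (1 - a)). lra. unfold R1. replace (Cp / (1 - a) * (1 - a)) with Cp by (field; lra). lra. }
  assert (HxD : forall n, D (x n)).
  { induction n; auto. rewrite Hrec. apply HDcv; [apply HfD | apply HTD | apply Ha01]; auto. }
  set (R2 := Rmax (vdist (x 0%nat) p) R1).
  assert (HR2 : R1 <= R2) by apply Rmax_r.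
  assert (Hxb : forall n, vdist (x n) p <= R2).
  { induction n. apply Rmax_l.
    assert (H1 : vdist (x (S n)) p <= alpha n * vdist (f (x n)) p + (1 - alpha n) * vdist (T (x n)) p).
    { rewrite Hrec. unfold vdist. rewrite (aff_sub _ _ _ p (alpha n) eq_refl).
      eapply Rle_trans. apply vnorm_triangle. pose proof (Ha01 n).
      rewrite !vnorm_scal_pos by lra. lra. }
    pose proof (Hfp _ (HxD n)). pose proof (HTp' _ (HxD n)). pose proof (Ha01 n).
    assert (a * vdist (x n) p + Cp <= R2) by nra.
    nra. }
  assert (HqN : forall e, 0 < e -> exists t, 0 < t < 1 /\ t < e /\ vdist (xt t) q < e).
  { intros e He. destruct (HQ e He) as [d [Hd Hc]].
    exists (Rmin (d / 2) (Rmin (1 / 2) (e / 2))).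
    assert (Hm1 := Rmin_l (d / 2) (Rmin (1 / 2) (e / 2))).
    assert (Hm2 := Rmin_r (d / 2) (Rmin (1 / 2) (e / 2))).
    assert (Hm3 := Rmin_l (1 / 2) (e / 2)). assert (Hm4 := Rmin_r (1 / 2) (e / 2)).
    assert (Hpos : 0 < Rmin (d / 2) (Rmin (1 / 2) (e / 2))).
    { apply Rmin_pos. lra. apply Rmin_pos; lra. }
    split; [lra|]. split; [lra|]. apply Hc; lra. }
  assert (Hqp : vdist q p <= R1 + 1).
  { destruct (HqN 1 ltac:(lra)) as [t [Ht [_ Hd]]].
    eapply Rle_trans. apply (vdist_tri _ (xt t)). rewrite vdist_sym in Hd.
    pose proof (Hnetb t Ht). lra. }
  assert (HqD : D q).
  { apply (HDcl (fun n => xt ((1/2) ^ (S n)))).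
    - intro n. apply Hxt. pose proof (half_pow n). simpl. lra.
    - intros e He. destruct (HQ e He) as [d [Hd Hc]].
      destruct (pow_lt_1_zero (1/2) ltac:(rewrite Rabs_pos_eq; lra) d Hd) as [N HN].
      exists N. intros n Hn. specialize (HN n Hn). rewrite Rabs_pos_eq in HN by (pose proof (half_pow n); lra).
      pose proof (half_pow n). apply Hc; simpl; lra. }
  set (Cb := a * R1 + Cp + R1).
  assert (HCb : 0 <= Cb) by (unfold Cb; nra).
  assert (HnetT : forall t, 0 < t < 1 -> vdist (T (xt t)) (xt t) <= t * Cb).
  { intros t Ht. destruct (Hxt t Ht) as [HD Heq]. rewrite vdist_sym. unfold vdist.
    rewrite (net_diff _ _ _ t Heq). rewrite vnorm_scal_pos by lra. apply Rmult_le_compat_l. lra.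
    change (vdist (f (xt t)) (T (xt t)) <= Cb).
    eapply Rle_trans. apply (vdist_tri _ p). rewrite (vdist_sym p).
    pose proof (Hfp _ HD). pose proof (HTp' _ HD). pose proof (Hnetb t Ht). unfold Cb. nra. }
  assert (HTq : T q = q).
  { apply vdist_eq0. apply (small_zero' _ (2 + Cb)). apply vdist_ge0. lra.
    intros e He. destruct (HqN e He) as [t [Ht [Hte Hd]]].
    eapply Rle_trans. apply (vdist_tri _ (T (xt t))).
    eapply Rle_trans. apply Rplus_le_compat_r. apply HTne; auto. apply Hxt; auto.
    eapply Rle_trans. apply Rplus_le_compat_l. apply (vdist_tri _ (xt t)).
    pose proof (HnetT t Ht). rewrite (vdist_sym q) in *.
    assert (t * Cb <= e * Cb) by (apply Rmult_le_compat_r; lra). nra. }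
  set (Kc := R1 + R2 + 1).
  set (U := (a + 1) * (R1 + 1) + Cp + 1).
  assert (HKc : 0 < Kc) by (unfold Kc; lra).
  assert (HU : 0 < U) by (unfold U; nra).
  set (v := vsub (f q) q).
  assert (Hv : vnorm v <= U).
  { unfold v. change (vdist (f q) q <= U). eapply Rle_trans. apply (vdist_tri _ p).
    rewrite (vdist_sym p). pose proof (Hfp _ HqD). unfold U. nra. }
  assert (Hxq : forall n, vdist (x n) q <= Kc).
  { intro n. eapply Rle_trans. apply (vdist_tri _ p). rewrite (vdist_sym p).
    pose proof (Hxb n). unfold Kc. lra. }
  assert (Hkey : forall e, 0 < e -> exists r, 0 < r /\ exists N, forall n, (N <= n)%nat ->
            Qp (vsub (x n) q) v r <= e).
  { intros e He. set (e' := e / 4).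
    destruct (gap Hus Kc U e' HKc HU ltac:(unfold e'; lra)) as [r0 [Hr0 Hgap]].
    set (r := Rmin r0 1).
    assert (Hr : 0 < r <= r0 /\ r <= 1).
    { unfold r. split; [split|]. apply Rmin_pos; lra. apply Rmin_l. apply Rmin_r. }
    set (L := 2 * (Kc + U) * (1 + (a + 1)) + 2 * Kc).
    assert (HL : 0 < L) by (unfold L; nra).
    set (eta := e' * r / L).
    assert (Heta : 0 < eta) by (unfold eta, e'; apply Rdiv_lt_0_compat; nra).
    destruct (HqN eta Heta) as [t [Ht [_ Htq]]].
    destruct (Hxt t Ht) as [HtD Heq].
    set (s := t / (1 - t)).
    assert (Hs : 0 < s) by (unfold s; apply Rdiv_lt_0_compat; lra).
    set (gam := Rmin 1 (s * e' / (2 * Kc + 1))).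
    assert (Hgam : 0 < gam) by (unfold gam, e'; apply Rmin_pos; [lra| apply Rdiv_lt_0_compat; nra]).
    destruct (uncv_lt _ HTx gam Hgam) as [N HN].
    exists r. split. lra. exists N. intros n Hn.
    specialize (HN n Hn). cbv beta in HN.
    set (g := vdist (T (x n)) (x n)) in *.
    assert (Hg0 : 0 <= g) by apply vdist_ge0.
    assert (Hgl : gam <= 1) by apply Rmin_l.
    assert (Hgr : gam <= s * e' / (2 * Kc + 1)) by apply Rmin_r.
    assert (Hg1 : g <= 1) by lra.
    assert (Hg2 : g * (2 * Kc + 1) <= s * e').
    { assert (H0 : g <= s * e' / (2 * Kc + 1)) by lra.
      apply (Rmult_le_compat_r (2 * Kc + 1)) in H0; [|lra].
      replace (s * e' / (2 * Kc + 1) * (2 * Kc + 1)) with (s * e') in H0 by (field; lra). lra. }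
    set (z := vsub (xt t) (x n)). set (u := vsub (f (xt t)) (xt t)).
    assert (Hz : vnorm z <= Kc).
    { unfold z. change (vdist (xt t) (x n) <= Kc). eapply Rle_trans. apply (vdist_tri _ p).
      rewrite (vdist_sym p). pose proof (Hxb n). pose proof (Hnetb t Ht). unfold Kc. lra. }
    assert (Hu : vnorm u <= U).
    { unfold u. change (vdist (f (xt t)) (xt t) <= U). eapply Rle_trans. apply (vdist_tri _ p).
      rewrite (vdist_sym p). pose proof (Hfp _ HtD). pose proof (Hnetb t Ht). unfold U. nra. }
    assert (Hsa : vnorm (vadd z (vscal (- s) u)) <= vnorm z + g).
    { unfold z, u, s. rewrite <- (net_T _ _ _ (x n) t Ht Heq).
      change (vdist (T (xt t)) (x n) <= vdist (xt t) (x n) + g).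
      eapply Rle_trans. apply (vdist_tri _ (T (x n))). apply Rplus_le_compat_r. apply HTne; auto. }
    assert (Hz0 : 0 <= vnorm z) by apply vnorm_ge0.
    assert (Hsa2 : hq z u (- s) <= (vnorm z + g) ^ 2).
    { unfold hq. apply pow_incr. split. apply vnorm_ge0. exact Hsa. }
    pose proof (left_le_right z u s r Hs ltac:(lra)) as Hb.
    assert (Hc : - e' <= (vnorm z ^ 2 - hq z u (- s)) / s).
    { apply (Rmult_le_reg_r s). lra.
      replace ((vnorm z ^ 2 - hq z u (- s)) / s * s) with (vnorm z ^ 2 - hq z u (- s)) by (field; lra).
      assert (g * g <= g) by nra.
      assert (2 * vnorm z * g <= 2 * Kc * g) by nra.
      nra. }
    pose proof (Hgap r z u ltac:(lra) Hz Hu) as Hd.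
    assert (He2 : Qp (vsub (x n) (xt t)) u r <= 2 * e').
    { assert (Hopp : vnorm (vadd (vsub (x n) (xt t)) (vscal r u)) = vnorm (vadd z (vscal (- r) u))).
      { rewrite <- vnorm_opp. apply vnorm_eq_of. unfold z. vlin. }
      assert (Hopp2 : vnorm (vsub (x n) (xt t)) = vnorm z).
      { unfold z. change (vdist (x n) (xt t) = vdist (xt t) (x n)). apply vdist_sym. }
      unfold Qp in *. rewrite hq0 in *. unfold hq in *. rewrite Hopp, Hopp2.
      apply (Rmult_le_reg_r r). lra.
      replace ((vnorm (vadd z (vscal (- r) u)) ^ 2 - vnorm z ^ 2) / r * r)
        with (vnorm (vadd z (vscal (- r) u)) ^ 2 - vnorm z ^ 2) by (field; lra).
      assert (Hb' : - e' <= (vnorm (vadd z (vscal r u)) ^ 2 - vnorm z ^ 2) / r) by lra.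
      apply (Rmult_le_compat_r r) in Hb'; [|lra].
      replace ((vnorm (vadd z (vscal r u)) ^ 2 - vnorm z ^ 2) / r * r)
        with (vnorm (vadd z (vscal r u)) ^ 2 - vnorm z ^ 2) in Hb' by (field; lra).
      lra. }
    assert (Hl : Qp (vsub (x n) q) v r <= Qp (vsub (x n) (xt t)) u r +
       (2 * (Kc + U) * (eta + r * ((a + 1) * eta)) + 2 * Kc * eta) / r).
    { apply Qp_lip; try lra.
      - apply Hxq.
      - change (vdist (x n) (xt t) <= Kc). rewrite vdist_sym. exact Hz.
      - replace (vsub (vsub (x n) q) (vsub (x n) (xt t))) with (vsub (xt t) q) by vlin.
        change (vdist (xt t) q <= eta). lra.
      - unfold v, u. replace (vsub (vsub (f q) q) (vsub (f (xt t)) (xt t)))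
          with (vadd (vsub (f q) (f (xt t))) (vsub (xt t) q)) by vlin.
        eapply Rle_trans. apply vnorm_triangle.
        change (vdist (f q) (f (xt t)) + vdist (xt t) q <= (a + 1) * eta).
        pose proof (Hfc q (xt t) HqD HtD) as Hfq. rewrite (vdist_sym q (xt t)) in Hfq.
        assert (a * vdist (xt t) q <= a * eta) by (apply Rmult_le_compat_l; lra). lra. }
    assert (Herr : (2 * (Kc + U) * (eta + r * ((a + 1) * eta)) + 2 * Kc * eta) / r <= e').
    { apply (Rmult_le_reg_r r). lra.
      replace ((2 * (Kc + U) * (eta + r * ((a + 1) * eta)) + 2 * Kc * eta) / r * r)
        with (2 * (Kc + U) * (eta + r * ((a + 1) * eta)) + 2 * Kc * eta) by (field; lra).
      assert (HeL : eta * L = e' * r) by (unfold eta; field; lra).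
      assert (Hae : 0 <= (a + 1) * eta) by nra.
      assert (H1 : r * ((a + 1) * eta) <= (a + 1) * eta).
      { rewrite <- (Rmult_1_l ((a + 1) * eta)) at 2. apply Rmult_le_compat_r; lra. }
      assert (H2 : 2 * (Kc + U) * (eta + r * ((a + 1) * eta)) <= 2 * (Kc + U) * (eta + (a + 1) * eta)).
      { apply Rmult_le_compat_l; lra. }
      assert (H3 : 2 * (Kc + U) * (eta + (a + 1) * eta) + 2 * Kc * eta = eta * L) by (unfold L; ring).
      lra. }
    unfold e' in *. lra. }
  set (Cf := a * R2 + Cp + R2).
  assert (HCf : 0 <= Cf) by (unfold Cf; nra).
  assert (Hen : forall n, vdist (x (S n)) (x n) <= alpha n * Cf + vdist (T (x n)) (x n)).
  { intro n. unfold vdist. rewrite Hrec.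
    replace (vsub (vadd (vscal (alpha n) (f (x n))) (vscal (1 - alpha n) (T (x n)))) (x n))
      with (vadd (vscal (alpha n) (vsub (f (x n)) (T (x n)))) (vsub (T (x n)) (x n))) by vlin.
    eapply Rle_trans. apply vnorm_triangle. pose proof (Ha01 n).
    rewrite vnorm_scal_pos by lra. apply Rplus_le_compat_r. apply Rmult_le_compat_l. lra.
    change (vdist (f (x n)) (T (x n)) <= Cf). eapply Rle_trans. apply (vdist_tri _ p).
    rewrite (vdist_sym p). pose proof (Hfp _ (HxD n)). pose proof (HTp' _ (HxD n)). pose proof (Hxb n).
    unfold Cf. nra. }
  assert (Hstep : forall eps, 0 < eps -> exists N, forall n, (N <= n)%nat ->
     vdist (x (S n)) q ^ 2 <= (1 - (1 - a) * alpha n) * vdist (x n) q ^ 2 + alpha n * eps).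
  { intros eps Heps.
    destruct (Hkey (eps / 3) ltac:(lra)) as [r1 [Hr1 [N1 HN1]]].
    set (r := Rmin (r1 / 2) (eps / (6 * Kc ^ 2 + 1))).
    assert (Hr : 0 < r) by (unfold r; apply Rmin_pos; [lra | apply Rdiv_lt_0_compat; nra]).
    assert (Hr1' : 2 * r <= r1) by (assert (r <= r1 / 2) by apply Rmin_l; lra).
    assert (HrK : 2 * r * Kc ^ 2 <= eps / 3).
    { assert (Hrr : r <= eps / (6 * Kc ^ 2 + 1)) by apply Rmin_r.
      apply (Rmult_le_compat_r (6 * Kc ^ 2 + 1)) in Hrr; [|nra].
      replace (eps / (6 * Kc ^ 2 + 1) * (6 * Kc ^ 2 + 1)) with eps in Hrr by (field; nra).
      nra. }
    set (gam := Rmin (1 - a) (eps / (6 * (a * Kc + 1) * (Cf + 1)))).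
    assert (Hgam : 0 < gam) by (unfold gam; apply Rmin_pos; [lra | apply Rdiv_lt_0_compat; [lra | apply Rmult_lt_0_compat; [nra | lra]]]).
    assert (Hgl : gam <= 1 - a) by apply Rmin_l.
    assert (Hgr : gam <= eps / (6 * (a * Kc + 1) * (Cf + 1))) by apply Rmin_r.
    destruct (uncv_lt _ Ha0 gam Hgam) as [N2 HN2].
    destruct (uncv_lt _ HTx gam Hgam) as [N3 HN3].
    exists (N1 + N2 + N3)%nat. intros n Hn.
    specialize (HN2 n ltac:(lia)). specialize (HN3 n ltac:(lia)). cbv beta in HN3.
    pose proof (Ha01 n) as Han.
    set (al := alpha n) in *.
    set (Dn := vdist (x n) q).
    assert (HDn : 0 <= Dn) by apply vdist_ge0.
    assert (HDnK : Dn <= Kc) by apply Hxq.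
    set (en := vdist (x (S n)) (x n)).
    assert (Hen0 : 0 <= en) by apply vdist_ge0.
    assert (Henb : 2 * a * en * Kc <= eps / 3).
    { assert (H1 : en <= gam * (Cf + 1)).
      { pose proof (Hen n). fold al in H. fold en in H.
        assert (al * Cf <= gam * Cf) by (apply Rmult_le_compat_r; lra). lra. }
      assert (H2 : gam * (Cf + 1) * (6 * (a * Kc + 1)) <= eps).
      { assert (Hpos : 0 < 6 * (a * Kc + 1) * (Cf + 1)) by (apply Rmult_lt_0_compat; [nra | lra]).
        apply (Rmult_le_compat_r (6 * (a * Kc + 1) * (Cf + 1))) in Hgr; [|lra].
        rewrite (div_mul_cancel eps _ (Rgt_not_eq _ _ Hpos)) in Hgr.
        lra. }
      assert (en * (6 * (a * Kc + 1)) <= eps).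
      { eapply Rle_trans; [|exact H2]. apply Rmult_le_compat_r; nra. }
      nra. }
    set (zS := vsub (x (S n)) q).
    set (W := vsub (f (x n)) q).
    set (X := vscal (1 - al) (vsub (T (x n)) q)).
    assert (HzS : zS = vadd X (vscal al W)).
    { unfold zS, X, W, al. rewrite Hrec. vlin. }
    assert (Hst := step_ineq X W al r ltac:(lra) Hr). rewrite <- HzS in Hst.
    assert (HX : vnorm X <= (1 - al) * Dn).
    { unfold X. rewrite vnorm_scal_pos by lra. apply Rmult_le_compat_l. lra.
      change (vdist (T (x n)) q <= Dn). rewrite <- HTq at 1. apply HTne; auto. }
    assert (HX2 : vnorm X ^ 2 <= (1 - al) ^ 2 * Dn ^ 2).
    { replace ((1 - al) ^ 2 * Dn ^ 2) with (((1 - al) * Dn) ^ 2) by ring.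
      apply pow_incr. split. apply vnorm_ge0. exact HX. }
    set (y := vsub (f (x n)) (f q)).
    assert (HW : W = vadd v y) by (unfold W, v, y; vlin).
    assert (Hy : vnorm y <= a * Dn) by (apply Hfc; auto).
    assert (Hy0 : 0 <= vnorm y) by apply vnorm_ge0.
    assert (HzSn : vnorm zS <= Dn + en).
    { unfold zS. change (vdist (x (S n)) q <= Dn + en). unfold en, Dn.
      rewrite Rplus_comm. apply vdist_tri. }
    assert (HQ1 : Qp zS W r <= Qp zS v (2 * r) + Qp zS y (2 * r)).
    { rewrite HW. apply Qp_subadd. lra. }
    assert (HQ2 : Qp zS v (2 * r) <= eps / 3).
    { eapply Rle_trans. apply (Qp_mono _ _ (2 * r) r1). lra. apply HN1. lia. }
    assert (HQ3 : Qp zS y (2 * r) <= 2 * vnorm zS * vnorm y + 2 * r * vnorm y ^ 2).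
    { apply Qp_bound. lra. }
    assert (HzS0 : 0 <= vnorm zS) by apply vnorm_ge0.
    assert (HQ4 : 2 * vnorm zS * vnorm y <= 2 * a * Dn ^ 2 + eps / 3).
    { assert (2 * vnorm zS * vnorm y <= 2 * (Dn + en) * (a * Dn)).
      { apply Rmult_le_compat; nra. }
      assert (H2 : 2 * a * en * Dn <= 2 * a * en * Kc) by (apply Rmult_le_compat_l; [nra | lra]).
      assert (H3 : 2 * (Dn + en) * (a * Dn) = 2 * a * Dn ^ 2 + 2 * a * en * Dn) by ring.
      lra. }
    assert (HQ5 : 2 * r * vnorm y ^ 2 <= eps / 3).
    { assert (vnorm y ^ 2 <= Kc ^ 2).
      { apply pow_incr. split; auto. assert (a * Dn <= Dn) by nra. lra. }
      nra. }
    assert (Hbr : Qp zS W r <= 2 * a * Dn ^ 2 + eps) by lra.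
    assert (Hbr2 : al * Qp zS W r <= al * (2 * a * Dn ^ 2 + eps)) by (apply Rmult_le_compat_l; lra).
    assert (Hcoef : (1 - al) ^ 2 * Dn ^ 2 + al * (2 * a * Dn ^ 2) <= (1 - (1 - a) * al) * Dn ^ 2).
    { assert (0 <= al * (1 - a - al) * Dn ^ 2).
      { apply Rmult_le_pos. apply Rmult_le_pos; lra. nra. }
      nra. }
    change (vnorm zS ^ 2 <= (1 - (1 - a) * al) * Dn ^ 2 + al * eps).
    nra. }
  intros eps Heps.
  destruct (xu_lemma (fun n => vdist (x n) q ^ 2) alpha (1 - a) ltac:(lra) Ha01 Hasum
    ltac:(intro; apply pow2_ge_0) Hstep (eps ^ 2) ltac:(nra)) as [N HN].
  exists N. intros n Hn. specialize (HN n Hn). cbv beta in HN.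
  pose proof (vdist_ge0 (x n) q). destruct (Rlt_le_dec (vdist (x n) q) eps) as [Hl|Hl]; auto.
  assert (eps ^ 2 <= vdist (x n) q ^ 2) by (apply pow_incr; lra). lra.
Qed.
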